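(* Let $n\ge1$ and let $\mathcal F$ be a collection of even-cardinality subsets of $[n]$ such that for every integer $r$ with $0\le r\le \lfloor n/2\rfloor$, the members of $\mathcal F$ of size $2r$ form the collection of bases of a sparse paving matroid with ground set $[n]$ and rank $2r$. Then $\mathcal F$ is the collection of feasible sets of a delta-matroid with ground set $[n]$.
   Context: A matroid is paving if it has no circuits of size strictly smaller than its rank, and sparse paving if both it and its dual are paving. A delta-matroid $(E,\mathcal F)$ consists of a finite ground set $E$ and a non-empty collection $\mathcal F$ of subsets of $E$ (the feasible sets) satisfying the symmetric exchange axiom: for all $X,Y\in\mathcal F$ and every $e\in X\triangle Y$ there exists $f\in X\triangle Y$ (possibly $f=e$) with $X\triangle\{e,f\}\in\mathcal F$. $[n]=\{1,\dots,n\}$. *)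

(* Defs.v *)
(* Matroids are given by their collections of bases,
   delta-matroids by their feasible sets, over a finite ground type T. *)
From HB Require Import structures.
From mathcomp Require Import all_boot.
Set Implicit Arguments. Unset Strict Implicit. Unset Printing Implicit Defensive.

Section Defs.
Variable T : finType.

Definition symdiff (X Y : {set T}) : {set T} := (X :\: Y) :|: (Y :\: X).

Definition is_matroid_bases (B : {set {set T}}) : Prop :=
  B != set0 /\
  forall X Y, X \in B -> Y \in B -> forall e, e \in X :\: Y ->
    exists2 f, f \in Y :\: X & (X :\ e) :|: [set f] \in B.

Definition matroid_bases_of_rank (B : {set {set T}}) (k : nat) : Prop :=
  is_matroid_bases B /\ forall X, X \in B -> #|X| = k.

Definition independent (B : {set {set T}}) (X : {set T}) : bool :=
  [exists Y in B, X \subset Y].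

Definition circuit (B : {set {set T}}) (C : {set T}) : Prop :=
  ~~ independent B C /\ forall D : {set T}, D \proper C -> independent B D.

Definition paving (B : {set {set T}}) (k : nat) : Prop :=
  forall C, circuit B C -> k <= #|C|.

Definition dual_bases (B : {set {set T}}) : {set {set T}} :=
  [set ~: X | X in B].

Definition sparse_paving_bases (B : {set {set T}}) (k : nat) : Prop :=
  matroid_bases_of_rank B k /\ paving B k /\ paving (dual_bases B) (#|T| - k).

Definition is_delta_matroid (F : {set {set T}}) : Prop :=
  F != set0 /\
  forall X Y, X \in F -> Y \in F -> forall e, e \in symdiff X Y ->
    exists2 f, f \in symdiff X Y & symdiff X [set e; f] \in F.

End Defs.

(* Main.v *)
Require Import Defs.
From HB Require Import structures.
From mathcomp Require Import all_boot zify.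
Set Implicit Arguments. Unset Strict Implicit. Unset Printing Implicit Defensive.

Section Aux.
Variable T : finType.
Implicit Types (B : {set {set T}}) (X Y Z W : {set T}).

Lemma small_indep B k Z : paving B k -> #|Z| < k -> independent B Z.
Proof.
move=> Hp HZ; apply: contraT => HnZ.
pose P := fun C : {set T} => (C \subset Z) && ~~ independent B C.
have PZ : P Z by rewrite /P subxx HnZ.
case: (@arg_minnP _ Z P (fun C : {set T} => #|C|) PZ) => C /andP[CZ nC] Cmin.
have : circuit B C.
  split => // D DC; apply: contraT => nD.
  have := Cmin D; rewrite /P (subset_trans (proper_sub DC) CZ) nD => /(_ isT).
  by rewrite leqNgt proper_card.
move/Hp => kC.
by have := leq_trans kC (subset_leq_card CZ); rewrite leqNgt HZ.
Qed.

Lemma diff1_eq Z (A : {set T}) (a : T) : Z \subset A -> A :\: Z = [set a] -> A = a |: Z.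
Proof.
move=> /subsetP sZ H; apply/setP => x; rewrite !inE.
have := congr1 (fun S : {set T} => x \in S) H; rewrite !inE.
case xZ: (x \in Z); first by rewrite orbT (sZ _ xZ).
by rewrite orbF /= => ->.
Qed.

Lemma sparse_pair B k (S1 S2 : {set T}) : sparse_paving_bases B k -> #|S1| = k -> #|S2| = k ->
  #|S1 :\: S2| = 1 -> (S1 \in B) || (S2 \in B).
Proof.
move=> [[[_ Hex] Hk] [Hp Hpd]] c1 c2 d1.
apply/negPn/negP; rewrite negb_or => /andP[n1 n2].
set Z := S1 :&: S2.
have cZ1 := cardsID S2 S1. have cZ2 := cardsID S1 S2.
rewrite setIC -/Z in cZ2.
have d2 : #|S2 :\: S1| = 1.
  by move: cZ1 cZ2; rewrite -/Z d1 c1 c2 => <- /eqP; rewrite eqn_add2l => /eqP.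
move/eqP: d1 => /cards1P [a Ha]. move/eqP: d2 => /cards1P [b Hb].
have S1E : S1 = a |: Z.
  apply: diff1_eq; first exact: subsetIl.
  by rewrite -Ha; apply/setP => x; rewrite !inE; case: (x \in S1); rewrite ?andbF ?andbT.
have S2E : S2 = b |: Z.
  apply: diff1_eq; first exact: subsetIr.
  by rewrite -Hb; apply/setP => x; rewrite !inE; case: (x \in S2); rewrite ?andbF ?andbT.
have aZ : a \notin Z by rewrite /Z !inE; have := congr1 (fun S : {set T} => a \in S) Ha; rewrite !inE eqxx => /andP[h1 ->]; rewrite (negbTE h1) ?andbF.
have bZ : b \notin Z by rewrite /Z !inE; have := congr1 (fun S : {set T} => b \in S) Hb; rewrite !inE eqxx => /andP[h1 ->]; rewrite (negbTE h1) ?andbF.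
have cZk : #|Z| = k.-1 by rewrite -c1 S1E cardsU1 aZ.
have k0 : 0 < k by rewrite -c1 S1E cardsU1 aZ.
have := @small_indep B k Z Hp; rewrite cZk prednK // => /(_ (leqnn k)).
case/exists_inP => B0 B0B ZB0.
have cB0 : #|B0 :\: Z| = 1.
  have := cardsID Z B0; rewrite (setIidPr ZB0) (Hk _ B0B) cZk => h.
  by apply/eqP; rewrite -(eqn_add2l k.-1) h addn1 prednK.
move/eqP: cB0 => /cards1P [c Hc].
have B0E := diff1_eq ZB0 Hc.
have cZ : c \notin Z by rewrite B0E in Hc; have := congr1 (fun S : {set T} => c \in S) Hc; rewrite !inE eqxx => /andP[].
have cU : #|S1 :|: S2| = k.+1.
  have := cardsUI S1 S2; rewrite -/Z cZk c1 c2 => h.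
  by apply/eqP; rewrite -(eqn_add2r k.-1) h addSn -addnS prednK.
have kT : k.+1 <= #|T| by rewrite -cU max_card.
have : independent (dual_bases B) (~: (S1 :|: S2)).
  apply: (small_indep Hpd); rewrite cardsCs setCK cU.
  by rewrite ltn_sub2l.
case/exists_inP => Y /imsetP [D DB ->]; rewrite setCS => DS.
have cD : c \notin D.
  apply/negP => cD; have := subsetP DS _ cD; rewrite S1E S2E in_setU !in_setU1 (negbTE cZ) !orbF.
  case/orP => /eqP ec.
  - by move: n1; rewrite S1E -ec -B0E B0B.
  - by move: n2; rewrite S2E -ec -B0E B0B.
have cBD : c \in B0 :\: D by rewrite inE cD B0E setU11.
have [f fD] := Hex B0 D B0B DB c cBD.
rewrite B0E setU1K // => HB.
move: fD; rewrite inE => /andP[fB0 fD].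
have := subsetP DS _ fD; rewrite inE => /orP[] fS.
- have fa : f = a.
    apply/eqP; move: fS fB0; rewrite S1E B0E !in_setU1; case: (f == a) => //= fZ.
    by rewrite fZ orbT.
  by move: n1; rewrite S1E -fa setUC HB.
- have fa : f = b.
    apply/eqP; move: fS fB0; rewrite S2E B0E !in_setU1; case: (f == b) => //= fZ.
    by rewrite fZ orbT.
  by move: n2; rewrite S2E -fa setUC HB.
Qed.
End Aux.

Section Aux2.
Variable T : finType.
Implicit Types (X Y W : {set T}) (e f : T).

Lemma sd_split X e f : e != f ->
  symdiff X [set e; f] = if f \in X then symdiff X [set e] :\ f else f |: symdiff X [set e].
Proof.
move=> ef; apply/setP => x; rewrite /symdiff.
case fX: (f \in X); rewrite !inE;
case: (eqVneq x f) => [->|xf]; rewrite ?fX ?eqxx ?(negbTE ef) ?(eq_sym f e) ?(negbTE ef) //=;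
by rewrite ?orbF ?andbT.
Qed.

Lemma mem_sd1 X e f : e != f -> (f \in symdiff X [set e]) = (f \in X).
Proof.
by move=> ef; rewrite /symdiff !inE (eq_sym f e) (negbTE ef) /= ?andbF ?andbT ?orbF.
Qed.

Lemma sd1E X e : symdiff X [set e] = if e \in X then X :\ e else e |: X.
Proof.
apply/setP => x; rewrite /symdiff; case eX: (e \in X); rewrite !inE;
case: (eqVneq x e) => [->|xe]; rewrite ?eX ?eqxx ?(negbTE xe) /=; by case: (x \in X).
Qed.

Lemma odd_sd1 X e : odd #|symdiff X [set e]| = ~~ odd #|X|.
Proof.
rewrite sd1E; case eX: (e \in X).
  by rewrite (cardsD1 e X) eX /= negbK.
by rewrite cardsU1 eX.
Qed.

Lemma sd_inv X Y : symdiff X (symdiff X Y) = Y.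
Proof.
apply/setP => x; rewrite /symdiff !inE.
by case: (x \in X); case: (x \in Y).
Qed.

Lemma odd_sd X Y : odd #|symdiff X Y| = odd #|X| (+) odd #|Y|.
Proof.
have h := cardsUI (X :\: Y) (Y :\: X).
have e0 : (X :\: Y) :&: (Y :\: X) = set0.
  by apply/setP => x; rewrite !inE; case: (x \in X); case: (x \in Y).
rewrite e0 cards0 addn0 in h; rewrite /symdiff h.
rewrite -(cardsID Y X) -(cardsID X Y) setIC.
by rewrite !oddD; case: (odd _); case: (odd _); case: (odd _).
Qed.

Lemma pair_del W f1 f2 : f1 \in W -> f2 \in W -> f1 != f2 ->
  #|W :\ f2| = #|W :\ f1| /\ #|(W :\ f1) :\: (W :\ f2)| = 1.
Proof.
move=> h1 h2 ne; split.
  by apply/eqP; rewrite -(eqn_add2l 1); have := cardsD1 f1 W; have := cardsD1 f2 W;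
     rewrite h1 h2 /= => <- <-.
have -> : (W :\ f1) :\: (W :\ f2) = [set f2]; last exact: cards1.
apply/setP => x; rewrite !inE; case: (eqVneq x f2) => [->|]; rewrite ?h2 ?(eq_sym f2) ?(negbTE ne) //=.
by move=> _; case: (x \in W); rewrite ?andbF.
Qed.

Lemma pair_add W f1 f2 : f1 \notin W -> f2 \notin W -> f1 != f2 ->
  #|f2 |: W| = #|f1 |: W| /\ #|(f1 |: W) :\: (f2 |: W)| = 1.
Proof.
move=> h1 h2 ne; split; first by rewrite !cardsU1 h1 h2.
have -> : (f1 |: W) :\: (f2 |: W) = [set f1]; last exact: cards1.
apply/setP => x; rewrite !inE; case: (eqVneq x f1) => [->|]; rewrite ?(negbTE h1) ?(negbTE ne) //=.
by case: (x \in W); rewrite ?orbT ?andbF //= orbF andbT.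
Qed.

Lemma two_elems (S : {set T}) : 1 < #|S| -> exists f1, exists f2, [/\ f1 \in S, f2 \in S & f1 != f2].
Proof.
move=> h; have : 0 < #|S| by apply: ltnW.
rewrite card_gt0 => /set0Pn [f1 h1].
have : 0 < #|S :\ f1| by move: h; rewrite (cardsD1 f1 S) h1.
rewrite card_gt0 => /set0Pn [f2]; rewrite !inE => /andP[n h2].
by exists f1, f2; split; rewrite // eq_sym.
Qed.
End Aux2.

Theorem lemma4p1 (n : nat) (F : {set {set 'I_n}}) :
  1 <= n ->
  (forall X, X \in F -> ~~ odd #|X|) ->
  (forall r, r <= n./2 ->
     sparse_paving_bases [set X in F | #|X| == 2 * r] (2 * r)) ->
  is_delta_matroid F.
Proof.
move=> n1 Hev Hl.
have pairF : forall S1 S2 : {set 'I_n}, ~~ odd #|S1| -> #|S2| = #|S1| ->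
    #|S1 :\: S2| = 1 -> (S1 \in F) || (S2 \in F).
  move=> S1 S2 ev c d.
  have r2 : 2 * (#|S1|./2) = #|S1| by rewrite mul2n even_halfK.
  have rle : #|S1|./2 <= n./2 by apply: half_leq; rewrite -[X in _ <= X](card_ord n) max_card.
  have := sparse_pair (S1:=S1) (S2:=S2) (Hl _ rle); rewrite r2 c d => /(_ erefl erefl erefl).
  by rewrite !inE c eqxx !andbT.
split.
  have [[[ne _] _] _] := Hl 0 (leq0n _).
  case/set0Pn: ne => X; rewrite inE => /andP[XF _]; apply/set0Pn; by exists X.
move=> X Y XF YF e eD.
have evX := Hev X XF.
have cand : forall f1 f2, f1 \in symdiff X Y -> f2 \in symdiff X Y -> f1 != f2 ->
    e != f1 -> e != f2 -> (f1 \in X) = (f2 \in X) ->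
    exists2 f, f \in symdiff X Y & symdiff X [set e; f] \in F.
  move=> f1 f2 h1 h2 ne ef1 ef2 eqX.
  have oW : odd #|symdiff X [set e]| by rewrite odd_sd1.
  suff : (symdiff X [set e; f1] \in F) || (symdiff X [set e; f2] \in F).
    by case/orP => h; [exists f1 | exists f2].
  rewrite !sd_split // -eqX.
  have w1 : (f1 \in symdiff X [set e]) = (f1 \in X) by rewrite mem_sd1.
  have w2 : (f2 \in symdiff X [set e]) = (f1 \in X) by rewrite mem_sd1 // -eqX.
  set W := symdiff X [set e] in oW w1 w2 *.
  case f1X : (f1 \in X) in w1 w2 *.
  - have [cc dd] := pair_del w1 w2 ne.
    apply: pairF => //.
    by move: oW; rewrite (cardsD1 f1 W) w1 /= add0n.
  - have [cc dd] := pair_add (negbT w1) (negbT w2) ne.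
    apply: pairF => //.
    by rewrite cardsU1 w1 /= negbK.
set D := symdiff X Y in eD cand *.
have evD : ~~ odd #|D| by rewrite /D odd_sd (negbTE evX) (negbTE (Hev Y YF)).
case: (leqP #|D| 2) => hD.
  have cD1 := cardsD1 e D; rewrite eD in cD1.
  have : #|D :\ e| == 1.
    apply/eqP; move: evD hD; rewrite cD1 /=.
    case: #|D :\ e| => [|[|m]] //=.
  case/cards1P => f Hf.
  have DE : D = [set e; f] by rewrite -(setD1K eD) Hf.
  exists f; first by rewrite DE !inE eqxx orbT.
  by rewrite -DE /D sd_inv.
have hD3 : 3 < #|D|.
  rewrite ltn_neqAle hD andbT; apply: contra evD => /eqP <- //.
have cD : #|D| = #|X :\: Y| + #|Y :\: X|.
  have h := cardsUI (X :\: Y) (Y :\: X).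
  have e0 : (X :\: Y) :&: (Y :\: X) = set0.
    by apply/setP => x; rewrite !inE; case: (x \in X); case: (x \in Y).
  by rewrite e0 cards0 addn0 in h; rewrite /D /symdiff h.
have mA : forall x, x \in X :\: Y -> x \in D by move=> x h; rewrite /D /symdiff inE h.
have mB : forall x, x \in Y :\: X -> x \in D by move=> x h; rewrite /D /symdiff inE h orbT.
have eD' := eD; rewrite /D /symdiff !inE in eD'.
case eX : (e \in X) in eD' *.
- have eA : e \in X :\: Y by rewrite inE eX andbT; move: eD'; case: (e \in Y).
  case: (ltnP 2 #|X :\: Y|) => hA.
  + have : 1 < #|(X :\: Y) :\ e| by move: hA; rewrite (cardsD1 e (X :\: Y)) eA.
    case/two_elems => f1 [f2 [h1 h2 ne]].
    move: h1 h2; rewrite !in_setD1 => /andP[n1' h1] /andP[n2 h2].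
    apply: (cand f1 f2) => //; try exact: mA; rewrite ?(eq_sym e) //.
    by move: h1 h2; rewrite !inE => /andP[_ ->] /andP[_ ->].
  + have : 1 < #|Y :\: X| by lia.
    case/two_elems => f1 [f2 [h1 h2 ne]].
    apply: (cand f1 f2) => //; try exact: mB.
    * by apply/eqP => ef; move: h1; rewrite -ef !inE eX.
    * by apply/eqP => ef; move: h2; rewrite -ef !inE eX.
    * by move: h1 h2; rewrite !inE => /andP[/negbTE -> _] /andP[/negbTE -> _].
- have eB : e \in Y :\: X by rewrite inE eX /=; move: eD'; rewrite andbF.
  case: (ltnP 2 #|Y :\: X|) => hB.
  + have : 1 < #|(Y :\: X) :\ e| by move: hB; rewrite (cardsD1 e (Y :\: X)) eB.
    case/two_elems => f1 [f2 [h1 h2 ne]].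
    move: h1 h2; rewrite !in_setD1 => /andP[n1' h1] /andP[n2 h2].
    apply: (cand f1 f2) => //; try exact: mB; rewrite ?(eq_sym e) //.
    by move: h1 h2; rewrite !inE => /andP[/negbTE -> _] /andP[/negbTE -> _].
  + have : 1 < #|X :\: Y| by lia.
    case/two_elems => f1 [f2 [h1 h2 ne]].
    apply: (cand f1 f2) => //; try exact: mA.
    * by apply/eqP => ef; move: h1; rewrite -ef !inE eX andbF.
    * by apply/eqP => ef; move: h2; rewrite -ef !inE eX andbF.
    * by move: h1 h2; rewrite !inE => /andP[_ ->] /andP[_ ->].
Qed.
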